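(* The canonical collection $\mathcal{S}$ satisfies $$\mathrm{excess}(\mathrm{OPT})\ \ge\ 2\varepsilon\cdot\big(y(\mathcal{U}_{\mathrm{sep}})-\mathrm{val}(\mathcal{S})\big).$$
   Context: Steiner Forest: finite undirected graph $G=(V,E)$ with non-negative edge costs $(c_e)_{e\in E}$ and a set $\mathcal{D}$ of demand pairs $\{a,b\}\subseteq V$ (partners); feasible solutions are $F\subseteq E$ with each demand pair in one connected component of $(V,F)$, of cost $c(F)=\sum_{e\in F}c_e$. $\mathrm{OPT}$ is a fixed optimal solution that is inclusionwise minimal (no cost-$0$ edge can be omitted keeping feasibility). For $U\subseteq V$, $\delta(U)$ is the set of edges with exactly one endpoint in $U$; $U$ separates $S$ if $S\cap U\ne\emptyset$ and $S\setminus U\ne\emptyset$. The $\varepsilon$-extended moat-growing algorithm (fixed $\varepsilon\ge0$): time $t$ increases continuously from $0$ at unit rate; it maintains tight edges $F$ (initially empty), duals $y_S(t)\ge0$ (initially $0$), and budgets of components (initially $0$). $\mathcal{C}^t$ is the family of vertex sets of connected components of $(V,F)$. A component is demand-active if it contains a vertex not connected in $(V,F)$ to some partner; budget-active if not demand-active but with positive budget; active if either; $\mathcal{A}^t$ is the set of active components. Each $y_S$, $S\in\mathcal{A}^t$, grows at unit rate; budgets of demand-active components grow at rate $\varepsilon$ and of budget-active ones decrease at rate $1$; an edge $e$ with $\sum_{S:e\in\delta(S)}y_S(t)=c_e$ becomes tight and is added to $F$; merging components add budgets. $y_S=y_S(\infty)$; $\mathcal{U}_{\mathrm{sep}}$ is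 the set of $U\in\mathrm{supp}(y)$ separating some demand pair; $y(\mathcal{U}')=\sum_{U\in\mathcal{U}'}y_U$; $\mathrm{excess}(F)=c(F)-y(\mathcal{U}_{\mathrm{sep}})$. The deactivation time $\tau_v$ of $v$ is the largest $t$ such that for all $s<t$, $v$ lies in a set of $\mathcal{A}^s$. Vertices $u,v$ are actively connected if for some $t$ they lie in a common set of $\mathcal{C}^t$ and $\tau_u,\tau_v\ge t$ (an equivalence relation). For each $U\in\mathcal{U}_{\mathrm{sep}}$ fix a demand pair $\varphi(U)$ separated by $U$. For a demand pair $d$, $\mathrm{val}(d)=\sum_{U:\varphi(U)=d}y_U$. A demand pair $\{a,b\}$ is satisfied by a set $S$ if $\{a,b\}\subseteq S$, and by a collection if by some member; $\mathrm{val}(\mathcal{S})$ is the sum of $\mathrm{val}(d)$ over demand pairs $d$ satisfied by $\mathcal{S}$. Canonical collection: start with a family $\mathcal{F}$ in which each tree (connected component) of $\mathrm{OPT}$ is its own forest; for each $U\in\mathcal{U}_{\mathrm{sep}}$, merge all forests of $\mathcal{F}$ that connect some demand pair separated by $U$ into a single forest. For each $F\in\mathcal{F}$ let $r_F$ be a vertex of $F$ with maximum deactivation time; for each connected component $T$ of $F$, let $S$ be the set of vertices of $T$ actively connected to $r_F$; if $S\ne\emptyset$, add $S$ to $\mathcal{S}$. *)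

(* Defs.v *)
From HB Require Import structures.
From mathcomp Require Import all_boot all_order all_algebra.
From mathcomp Require Import boolp reals.
Set Implicit Arguments. Unset Strict Implicit. Unset Printing Implicit Defensive.
Import Order.TTheory GRing.Theory Num.Theory.
Local Open Scope ring_scope.

Section SteinerForest.
(* Graph G = (V,E): E is a finite type of edges, edge e has endpoints eu e, ev e.
   c = edge costs, D = set of demand pairs (2-element vertex sets). *)
Variables (R : realType) (V E : finType) (eu ev : E -> V) (c : E -> R)
          (D : {set {set V}}).

Definition delta (U : {set V}) : {set E} := [set e | (eu e \in U) != (ev e \in U)].

Definition separates (U S : {set V}) : bool := (S :&: U != set0) && (S :\: U != set0).

Definition adj (F : {set E}) : rel V :=
  fun u v => [exists e in F, ((eu e == u) && (ev e == v)) || ((eu e == v) && (ev e == u))].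
Definition conn (F : {set E}) (u v : V) : bool := connect (adj F) u v.
Definition comp (F : {set E}) (v : V) : {set V} := [set w | conn F v w].
Definition comps (F : {set E}) : {set {set V}} := [set comp F v | v : V].

Definition cost (F : {set E}) : R := \sum_(e in F) c e.
Definition feasible (F : {set E}) : bool :=
  [forall d in D, forall a in d, forall b in d, conn F a b].

Variable eps : R.

Definition load (y : {set V} -> R) (e : E) : R := \sum_(S : {set V} | e \in delta S) y S.

Definition demand_active (F : {set E}) (C : {set V}) : bool :=
  [exists v in C, exists w, ([set v; w] \in D) && ~~ conn F v w].
Definition budget_active (F : {set E}) (b : {set V} -> R) (C : {set V}) : bool :=
  ~~ demand_active F C && (0 < b C).
Definition active (F : {set E}) (b : {set V} -> R) (C : {set V}) : bool :=
  (C \in comps F) && (demand_active F C || budget_active F b C).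
Definition brate (F : {set E}) (b : {set V} -> R) (C : {set V}) : R :=
  if demand_active F C then eps else if budget_active F b C then -1 else 0.

(* Event-driven description of the continuous process.
   Phase i (for i < k) is the time interval [t i, t (i+1)); during it the tight
   edge set is F i, the duals are y i + (s - t i) * [S active], budgets evolve
   linearly; (F i, y i, b i) is the state at time t i after all edges that became
   tight at time t i were added and the components merged (budgets added).
   t (i+1) is the first time at which an event happens (a new edge becomes tight
   or a budget-active component runs out of budget).  At index k no component is
   active any more, and nothing changes afterwards. *)
Definition phase_step (t : nat -> R) (F : nat -> {set E}) (y b : nat -> {set V} -> R)
    (i : nat) : Prop :=
  let d := t i.+1 - t i in
  [/\ 0 < d,
      (forall S, y i.+1 S = y i S + (if active (F i) (b i) S then d else 0)),
      (forall e, load (y i.+1) e <= c e),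
      F i.+1 = F i :|: [set e | load (y i.+1) e == c e]
    & [/\ (forall C, C \in comps (F i.+1) ->
             b i.+1 C = \sum_(C' in comps (F i) | C' \subset C)
                           (b i C' + brate (F i) (b i) C' * d)),
          (forall C, C \in comps (F i) -> budget_active (F i) (b i) C -> d <= b i C)
        & (exists e, e \notin F i /\ load (y i.+1) e = c e) \/
          (exists C, [/\ C \in comps (F i), budget_active (F i) (b i) C & b i C = d])]].

Definition moat_run (k : nat) (t : nat -> R) (F : nat -> {set E})
    (y b : nat -> {set V} -> R) : Prop :=
  [/\ t 0%N = 0, (forall S, y 0%N S = 0), (forall C, b 0%N C = 0),
      F 0%N = [set e | load (y 0%N) e == c e]
    & (forall i, (i < k)%N -> phase_step t F y b i) /\
      (forall C, ~~ active (F k) (b k) C)].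

Variables (k : nat) (t : nat -> R) (F : nat -> {set E}) (y b : nat -> {set V} -> R).

Definition phase (s : R) : nat := (\max_(i < k.+1 | (t i <= s)%R) i)%N.
Definition A_at (s : R) : {set {set V}} := [set C | active (F (phase s)) (b (phase s)) C].
Definition C_at (s : R) : {set {set V}} := comps (F (phase s)).

Definition in_active_at (s : R) (v : V) : bool := [exists C in A_at s, v \in C].
Definition is_deact_time (v : V) (tv : R) : Prop :=
  (forall s, 0 <= s -> s < tv -> in_active_at s v) /\
  (forall t', (forall s, 0 <= s -> s < t' -> in_active_at s v) -> t' <= tv).

Definition act_conn (tau : V -> R) (u v : V) : Prop :=
  exists s, [/\ 0 <= s, s <= tau u, s <= tau v & exists2 C, C \in C_at s & (u \in C) && (v \in C)].

(* final duals y_S = y_S(infinity) = y k S *)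
Definition Usep : {set {set V}} :=
  [set U | (0 < y k U) && [exists d in D, separates U d]].
Definition ysum (Us : {set {set V}}) : R := \sum_(U in Us) y k U.
Definition excess (OPT : {set E}) : R := cost OPT - ysum Usep.

Definition val (phi : {set V} -> {set V}) (d : {set V}) : R :=
  \sum_(U in Usep | phi U == d) y k U.

(* A forest is a set of trees (vertex sets). *)
Definition merge_step (fam : {set {set {set V}}}) (U : {set V}) : {set {set {set V}}} :=
  let M := [set B in fam | [exists T in B, exists d in D, separates U d && (d \subset T)]] in
  if M == set0 then fam else (fam :\: M) :|: [set cover M].
Definition forests (OPT : {set E}) : {set {set {set V}}} :=
  foldl merge_step [set [set T] | T in comps OPT] (enum Usep).

Definition canonical_collection (OPT : {set E}) (tau : V -> R) (r : {set {set V}} -> V) : {set {set V}} :=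
  [set S : {set V} | [exists B in forests OPT, exists T in B,
     (S == [set v in T | `[< act_conn tau v (r B) >]]) && (S != set0)]].

Definition satisfied (Ss : {set {set V}}) (d : {set V}) : bool := [exists S in Ss, d \subset S].
Definition valS (phi : {set V} -> {set V}) (Ss : {set {set V}}) : R :=
  \sum_(d in D | satisfied Ss d) val phi d.

End SteinerForest.

(* Main.v *)
Require Import Defs.
From HB Require Import structures.
From mathcomp Require Import all_boot all_order all_algebra.
From mathcomp Require Import boolp reals.
From mathcomp Require Import ring lra.
Set Implicit Arguments. Unset Strict Implicit. Unset Printing Implicit Defensive.
Import Order.TTheory GRing.Theory Num.Theory.
Local Open Scope ring_scope.

Section Graph.
Variables (V E : finType) (eu ev : E -> V).

Lemma adj_sym (F : {set E}) : symmetric (adj eu ev F).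
Proof.
move=> u v; rewrite /adj; apply/existsP/existsP => -[e /andP[He H]]; exists e;
  rewrite He /=; by rewrite orbC.
Qed.

Lemma conn_refl F v : conn eu ev F v v.
Proof. exact: connect0. Qed.

Lemma conn_sym F u v : conn eu ev F u v = conn eu ev F v u.
Proof. by rewrite /conn (sym_connect_sym (@adj_sym F)). Qed.

Lemma conn_trans F u v w : conn eu ev F u v -> conn eu ev F v w -> conn eu ev F u w.
Proof. exact: connect_trans. Qed.

Lemma in_comp F v w : (w \in Defs.comp eu ev F v) = conn eu ev F v w.
Proof. by rewrite /comp inE. Qed.

Lemma comp_self F v : v \in Defs.comp eu ev F v.
Proof. by rewrite in_comp conn_refl. Qed.

Lemma comp_eq F u v : conn eu ev F u v -> Defs.comp eu ev F u = Defs.comp eu ev F v.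
Proof.
move=> H; apply/setP => w; rewrite !in_comp; apply/idP/idP => H2.
  by apply: conn_trans H2; rewrite conn_sym.
by apply: conn_trans H2.
Qed.

Lemma compsE F C v : C \in comps eu ev F -> v \in C -> C = Defs.comp eu ev F v.
Proof.
move=> /imsetP[u _ ->]; rewrite in_comp => H; exact: comp_eq.
Qed.

Lemma comp_in_comps F v : Defs.comp eu ev F v \in comps eu ev F.
Proof. by apply/imsetP; exists v. Qed.

Lemma adj_edge (F : {set E}) e : e \in F -> adj eu ev F (eu e) (ev e).
Proof. by move=> He; apply/existsP; exists e; rewrite He !eqxx. Qed.

Lemma adjP (F : {set E}) u v : adj eu ev F u v ->
  exists2 e, e \in F & ((eu e = u) /\ (ev e = v)) \/ ((eu e = v) /\ (ev e = u)).
Proof.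
move=> /existsP[e /andP[He /orP[/andP[/eqP h1 /eqP h2]|/andP[/eqP h1 /eqP h2]]]].
  by exists e => //; left.
by exists e => //; right.
Qed.

Lemma conn_mono (F F' : {set E}) u v : F \subset F' -> conn eu ev F u v -> conn eu ev F' u v.
Proof.
move=> sFF'; apply: connect_sub => x z /adjP[e He H].
apply: connect1; apply/existsP; exists e; rewrite (subsetP sFF' _ He) /=.
by case: H => -[-> ->]; rewrite !eqxx // orbT.
Qed.

Lemma comp_mono (F F' : {set E}) v : F \subset F' -> Defs.comp eu ev F v \subset Defs.comp eu ev F' v.
Proof. move=> s; apply/subsetP => w; rewrite !in_comp; exact: conn_mono. Qed.

Lemma side_pres (F : {set E}) (S : {set V}) u v :
  (forall e, e \in F -> e \notin delta eu ev S) -> conn eu ev F u v -> (u \in S) = (v \in S).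
Proof.
move=> H; apply: closed_connect => x z /adjP[e He Hx].
have := H e He; rewrite /delta inE negbK => /eqP.
by case: Hx => -[<- <-].
Qed.

Lemma conn_del (F : {set E}) e x z : e \in F -> conn eu ev F x z ->
  [|| conn eu ev (F :\ e) x z,
      conn eu ev (F :\ e) x (eu e) && conn eu ev (F :\ e) (ev e) z |
      conn eu ev (F :\ e) x (ev e) && conn eu ev (F :\ e) (eu e) z].
Proof.
move=> He Hc.
set P := fun z => [|| conn eu ev (F :\ e) x z,
      conn eu ev (F :\ e) x (eu e) && conn eu ev (F :\ e) (ev e) z |
      conn eu ev (F :\ e) x (ev e) && conn eu ev (F :\ e) (eu e) z].
have cl : closed (adj eu ev F) [pred z | P z].
  move=> z1 z2 /adjP[f Hf Hz].
  have [efe|nfe] := eqVneq f e; first subst f.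
    have key : P (eu e) = P (ev e).
      rewrite /P !conn_refl !andbT.
      case: (conn eu ev (F :\ e) x (eu e)); case: (conn eu ev (F :\ e) x (ev e));
        by rewrite /= ?orbT ?orbF ?andbF.
    by case: Hz => -[<- <-]; rewrite !inE -/(P (eu e)) -/(P (ev e)) key.
  have Hf' : f \in F :\ e by rewrite !inE nfe.
  have cz : conn eu ev (F :\ e) z1 z2.
    by case: Hz => -[<- <-]; [|rewrite conn_sym]; apply: connect1; apply: adj_edge.
  rewrite !inE /P; apply/idP/idP.
    case/or3P => [h|/andP[h1 h2]|/andP[h1 h2]].
    - by rewrite (conn_trans h cz).
    - by rewrite h1 (conn_trans h2 cz) orbT.
    - by rewrite h1 (conn_trans h2 cz) !orbT.
  rewrite conn_sym in cz.
  case/or3P => [h|/andP[h1 h2]|/andP[h1 h2]].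
  - by rewrite (conn_trans h cz).
  - by rewrite h1 (conn_trans h2 cz) orbT.
  - by rewrite h1 (conn_trans h2 cz) !orbT.
have := closed_connect cl Hc; rewrite !inE /P conn_refl /= => <-.
done.
Qed.

End Graph.

Section Cross.
Variables (R : realType) (V E : finType) (eu ev : E -> V) (c : E -> R)
          (D : {set {set V}}) (OPT : {set E}).
Hypothesis c_ge0 : forall e, 0 <= c e.
Hypothesis feasOPT : feasible eu ev D OPT.
Hypothesis optOPT : forall F' : {set E}, feasible eu ev D F' -> cost c OPT <= cost c F'.
Hypothesis minOPT : forall e, e \in OPT -> c e = 0 -> ~~ feasible eu ev D (OPT :\ e).

Lemma feasP d a b' : d \in D -> a \in d -> b' \in d -> conn eu ev OPT a b'.
Proof.
move=> Hd Ha Hb; move/forallP: feasOPT => /(_ d); rewrite Hd /=.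
by move/forallP => /(_ a); rewrite Ha /= => /forallP /(_ b'); rewrite Hb.
Qed.

Lemma sep_sides (S d : {set V}) a b' :
  ~~ separates S d -> a \in d -> b' \in d -> (a \in S) = (b' \in S).
Proof.
move=> Hs Ha Hb; apply/idP/idP => H; apply/negPn/negP => H'; move/negP: Hs; apply;
  rewrite /separates; apply/andP; split; apply/set0Pn.
- by exists a; rewrite !inE Ha H.
- by exists b'; rewrite !inE Hb H'.
- by exists b'; rewrite !inE Hb H.
- by exists a; rewrite !inE Ha H'.
Qed.

Lemma nocross_pres (S : {set V}) u v :
  #|delta eu ev S :&: OPT| = 0%N -> conn eu ev OPT u v -> (u \in S) = (v \in S).
Proof.
move=> /cards0_eq H; apply: side_pres => e He; apply/negP => Hd.
have : e \in delta eu ev S :&: OPT by rewrite inE Hd He.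
by rewrite H inE.
Qed.

Lemma cross_ge1 (S d : {set V}) : d \in D -> separates S d -> (0 < #|delta eu ev S :&: OPT|)%N.
Proof.
move=> Hd /andP[/set0Pn[a] /setIP[Ha aS] /set0Pn[b'] /setDP[Hb bS]].
rewrite lt0n; apply/negP => /eqP H0.
have := nocross_pres H0 (feasP Hd Ha Hb); rewrite aS => /esym HbS.
by move: bS; rewrite HbS.
Qed.

Lemma cost_del e : e \in OPT -> cost c (OPT :\ e) = cost c OPT - c e.
Proof. by move=> He; rewrite /cost (big_setD1 e He) /= addrC addrK. Qed.

Lemma cross_not1 (S : {set V}) : (forall d, d \in D -> ~~ separates S d) ->
  #|delta eu ev S :&: OPT| != 1%N.
Proof.
move=> Hns; apply/negP => /cards1P[e He].
have eIn : e \in delta eu ev S :&: OPT by rewrite He set11.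
move: (eIn); rewrite inE => /andP[eD eO].
have noc : forall f, f \in OPT :\ e -> f \notin delta eu ev S.
  move=> f; rewrite !inE => /andP[nfe fO]; apply/negP => fD.
  have : f \in delta eu ev S :&: OPT by rewrite !inE fD fO.
  by rewrite He inE (negbTE nfe).
have feas' : feasible eu ev D (OPT :\ e).
  apply/forallP => d; apply/implyP => Hd; apply/forallP => a; apply/implyP => Ha.
  apply/forallP => b'; apply/implyP => Hb.
  have sab := sep_sides (Hns d Hd) Ha Hb.
  have eDS : (eu e \in S) != (ev e \in S) by move: eD; rewrite inE.
  case/or3P: (conn_del eO (feasP Hd Ha Hb)) => [//|/andP[h1 h2]|/andP[h1 h2]].
    move: eDS; by rewrite -(side_pres noc h1) (side_pres noc h2) sab eqxx.
  move: eDS; by rewrite -(side_pres noc h1) (side_pres noc h2) sab eqxx.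
have := c_ge0 e; rewrite le0r => /orP[/eqP c0|cpos].
  by move: (minOPT eO c0); rewrite feas'.
have := optOPT feas'; rewrite cost_del // => H.
have aux : forall x z : R, x <= x - z -> 0 < z -> False by move=> x z; lra.
by case: (aux _ _ H cpos).
Qed.

End Cross.

Section Moat.
Variables (R : realType) (V E : finType) (eu ev : E -> V) (c : E -> R)
          (D : {set {set V}}) (eps : R) (k : nat) (t : nat -> R)
          (F : nat -> {set E}) (y b : nat -> {set V} -> R).
Hypothesis run : moat_run eu ev c D eps k t F y b.
Hypothesis eps_ge0 : 0 <= eps.

Local Notation act i S := (active eu ev D (F i) (b i) S).
Local Notation DA i S := (demand_active eu ev D (F i) S).
Local Notation cps i := (comps eu ev (F i)).
Local Notation cn i := (conn eu ev (F i)).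
Local Notation cmp i := (Defs.comp eu ev (F i)).

Lemma t0 : t 0%N = 0. Proof. by case: run. Qed.
Lemma y0 S : y 0%N S = 0. Proof. by case: run => _ H. Qed.
Lemma b0 C : b 0%N C = 0. Proof. by case: run => _ _ H. Qed.
Lemma stepP i : (i < k)%N -> phase_step eu ev c D eps t F y b i.
Proof. by case: run => _ _ _ _ [H _]; apply: H. Qed.
Lemma finalP C : ~~ act k C.
Proof. by case: run => _ _ _ _ [_ H]. Qed.

Lemma dpos i : (i < k)%N -> 0 < t i.+1 - t i.
Proof. by move/stepP => [H _ _ _ _]. Qed.

Lemma t_lt i j : (i < j)%N -> (j <= k)%N -> t i < t j.
Proof.
move=> ij; elim: j ij => // j IH; rewrite ltnS leq_eqVlt => /orP[/eqP <-|ij] jk.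
  by have := dpos jk; rewrite subr_gt0.
apply: lt_trans (IH ij (ltnW jk)) _; by have := dpos jk; rewrite subr_gt0.
Qed.

Lemma t_ge0 i : (i <= k)%N -> 0 <= t i.
Proof.
case: i => [|i] ik; first by rewrite t0.
by rewrite -t0; apply/ltW/t_lt.
Qed.

Lemma F_step i : (i < k)%N -> F i \subset F i.+1.
Proof. by move/stepP => [_ _ _ -> _]; apply: subsetUl. Qed.

Lemma F_mono i j : (i <= j)%N -> (j <= k)%N -> F i \subset F j.
Proof.
move=> ij; elim: j ij => [|j IH]; first by rewrite leqn0 => /eqP ->.
rewrite leq_eqVlt => /orP[/eqP ->//|]; rewrite ltnS => ij jk.
exact: subset_trans (IH ij (ltnW jk)) (F_step jk).
Qed.

Lemma phaseE i s : (i < k)%N -> t i <= s -> s < t i.+1 -> phase k t s = i.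
Proof.
move=> ik lo hi; rewrite /phase; apply/eqP; rewrite eqn_leq; apply/andP; split.
  apply/bigmax_leqP => j /= tj; rewrite leqNgt; apply/negP => ij.
  have jk : (j <= k)%N := ltn_ord j.
  have : t i.+1 <= t j.
    move: ij; rewrite leq_eqVlt => /orP[/eqP <-//|ij']; exact/ltW/t_lt.
  by move=> /(lt_le_trans hi) /(le_lt_trans tj); rewrite ltxx.
have ik' : (i < k.+1)%N by apply: ltnW.
by apply: (@leq_bigmax_cond _ (fun j : 'I_k.+1 => t j <= s) (fun j : 'I_k.+1 => val j) (Ordinal ik')).
Qed.

Definition alive i v := forall s, 0 <= s -> s < t i -> in_active_at eu ev D k t F b s v.

Lemma alive0 v : alive 0 v.
Proof. by move=> s s0; rewrite t0 => /(le_lt_trans s0); rewrite ltxx. Qed.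

Lemma in_active_phase i s v : (i < k)%N -> t i <= s -> s < t i.+1 ->
  act i (cmp i v) -> in_active_at eu ev D k t F b s v.
Proof.
move=> ik lo hi Ha; apply/existsP; exists (cmp i v).
by rewrite /A_at inE (phaseE ik lo hi) Ha comp_self.
Qed.

Lemma alive_step i v : (i < k)%N -> alive i v -> act i (cmp i v) -> alive i.+1 v.
Proof.
move=> ik Hal Ha s s0 hi; have [lo|lo] := boolP (s < t i); first exact: Hal.
by apply: (in_active_phase ik) => //; rewrite leNgt.
Qed.

Lemma DA_comp i v w : [set v; w] \in D -> ~~ cn i v w -> DA i (cmp i v).
Proof.
move=> Hd Hc; apply/existsP; exists v; rewrite comp_self /=.
by apply/existsP; exists w; rewrite Hd Hc.
Qed.

Lemma active_DA i C : C \in cps i -> DA i C -> act i C.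
Proof. by move=> HC HD; rewrite /active HC HD. Qed.

Lemma alive_demand i a w : (i <= k)%N -> [set a; w] \in D -> ~~ cn i a w -> alive i a.
Proof.
elim: i => [|i IH] ik Hd Hc; first exact: alive0.
have Hc' : ~~ cn i a w.
  by apply: contra Hc; apply: conn_mono; apply: F_step.
apply: alive_step => //; first exact: IH (ltnW ik) Hd Hc'.
by apply: active_DA; [apply: comp_in_comps | apply: DA_comp Hd Hc'].
Qed.

Lemma alive_le_tau i v tv : alive i v -> is_deact_time eu ev D k t F b v tv -> t i <= tv.
Proof. by move=> Hal [_ H]; apply: H. Qed.

Lemma y_step i S : (i < k)%N ->
  y i.+1 S = y i S + (if act i S then t i.+1 - t i else 0).
Proof. by move/stepP => [_ H _ _ _]. Qed.

Lemma y_ge0 i S : (i <= k)%N -> 0 <= y i S.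
Proof.
elim: i => [|i IH] ik; first by rewrite y0.
rewrite y_step //; apply: addr_ge0; first exact: IH (ltnW ik).
by case: ifP => // _; apply/ltW/dpos.
Qed.

Lemma y_mono i j S : (i <= j)%N -> (j <= k)%N -> y i S <= y j S.
Proof.
move=> ij; elim: j ij => [|j IH]; first by rewrite leqn0 => /eqP ->.
rewrite leq_eqVlt => /orP[/eqP ->//|]; rewrite ltnS => ij jk.
apply: le_trans (IH ij (ltnW jk)) _; rewrite y_step // lerDl.
by case: ifP => // _; apply/ltW/dpos.
Qed.

Lemma ypos_active S : 0 < y k S -> exists2 j, (j < k)%N & act j S.
Proof.
suff H : forall j, (j <= k)%N -> 0 < y j S -> exists2 j', (j' < k)%N & act j' S.
  exact: H.
elim=> [|j IH] jk; first by rewrite y0 ltxx.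
rewrite y_step //; case: ifP => [Ha _|_]; first by exists j.
by rewrite addr0; apply: IH (ltnW jk).
Qed.



End Moat.

Lemma pair_eq (V : finType) (d : {set V}) p q :
  #|d| = 2%N -> p \in d -> q \in d -> p != q -> d = [set p; q].
Proof.
move=> Hc Hp Hq Hpq; apply/esym/eqP; rewrite eqEcard Hc cards2 Hpq andbT.
by apply/subsetP => x; rewrite !inE => /orP[/eqP->|/eqP->].
Qed.

Section Main.
Variables (R : realType) (V E : finType) (eu ev : E -> V) (c : E -> R)
  (D : {set {set V}}) (eps : R)
  (k : nat) (t : nat -> R) (F : nat -> {set E}) (y b : nat -> {set V} -> R)
  (OPT : {set E}) (tau : V -> R) (phi : {set V} -> {set V})
  (r : {set {set V}} -> V).
Hypothesis c_ge0 : forall e, 0 <= c e.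
Hypothesis D2 : forall d, d \in D -> #|d| = 2%N.
Hypothesis eps_ge0 : 0 <= eps.
Hypothesis run : moat_run eu ev c D eps k t F y b.
Hypothesis feasOPT : feasible eu ev D OPT.
Hypothesis optOPT : forall F' : {set E}, feasible eu ev D F' -> cost c OPT <= cost c F'.
Hypothesis minOPT : forall e, e \in OPT -> c e = 0 -> ~~ feasible eu ev D (OPT :\ e).
Hypothesis tauP : forall v, is_deact_time eu ev D k t F b v (tau v).
Hypothesis phiP : forall U, U \in Usep D k y -> phi U \in D /\ separates U (phi U).
Hypothesis rP : forall B, B \in forests eu ev D k y OPT ->
     r B \in cover B /\ (forall v, v \in cover B -> tau v <= tau (r B)).

Local Notation act i S := (active eu ev D (F i) (b i) S).
Local Notation DA i S := (demand_active eu ev D (F i) S).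
Local Notation cps i := (comps eu ev (F i)).
Local Notation cn i := (conn eu ev (F i)).
Local Notation cmp i := (Defs.comp eu ev (F i)).
Local Notation Usp := (Usep D k y).
Local Notation CC := (canonical_collection eu ev D k t F y OPT tau r).
Local Notation sat X := (satisfied CC X).
Local Notation alive := (alive eu ev D k t F b).

Lemma active_comps i S : act i S -> S \in cps i.
Proof. by case/andP. Qed.

Lemma sep_DA i S d : S \in cps i -> d \in D -> separates S d -> DA i S.
Proof.
move=> HS Hd /andP[/set0Pn[p /setIP[pd pS]] /set0Pn[q /setDP[qd qS]]].
have pq : p != q by apply: contraNneq qS => <-.
have dE := pair_eq (D2 Hd) pd qd pq.
apply/existsP; exists p; rewrite pS /=; apply/existsP; exists q.
rewrite -dE Hd /=; apply: contra qS => Hc.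
by rewrite (compsE HS pS) in_comp.
Qed.

Lemma Usep_sep U : U \in Usp -> exists2 d, d \in D & separates U d.
Proof. by rewrite inE => /andP[_ /existsP[d /andP[Hd Hs]]]; exists d. Qed.

Lemma laminar i U S v x : (i <= k)%N -> U \in Usp -> S \in cps i ->
  v \in U -> v \in S -> x \in S -> x \notin U -> U \subset S.
Proof.
move=> ik HU HS vU vS xS xU.
have [j jk Hj] : exists2 j, (j < k)%N & act j U.
  by apply: (ypos_active run); move: HU; rewrite inE => /andP[].
have HUj := active_comps Hj.
rewrite (compsE HUj vU) (compsE HS vS).
have [ji|ij] := leqP j i; first by apply: comp_mono; apply: (F_mono run).
have : cmp i v \subset cmp j v by apply: comp_mono; apply: (F_mono run) => //; exact: ltnW.
move/subsetP => /(_ x); rewrite -(compsE HS vS) -(compsE HUj vU) => /(_ xS).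
by rewrite (negbTE xU).
Qed.

Section Inv.
Variables (i : nat) (S : {set V}).
Hypothesis ik : (i <= k)%N.
Hypothesis HS : S \in cps i.
Hypothesis HT : forall T, T \in comps eu ev OPT -> (exists v, v \in T /\ v \in S) -> T \subset S.

Definition Inv (fam : {set {set {set V}}}) :=
  (forall T, T \in comps eu ev OPT -> exists2 B, B \in fam & T \in B) /\
  (forall B, B \in fam -> forall T0, T0 \in B -> (exists v, v \in T0 /\ v \in S) ->
      forall T, T \in B -> T \subset S).

Lemma Inv_init : Inv [set [set T] | T in comps eu ev OPT].
Proof.
split.
  by move=> T HT0; exists [set T]; [apply/imsetP; exists T | rewrite set11].
move=> B /imsetP[T1 HT1 ->] T0; rewrite inE => /eqP -> Hm T; rewrite inE => /eqP ->.
exact: HT.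
Qed.

Lemma Inv_merge fam U : U \in Usp -> Inv fam -> Inv (merge_step D fam U).
Proof.
move=> HU [I1 I2]; rewrite /merge_step.
set M := [set B in fam | _].
case: eqP => [_|_]; first by split.
split.
  move=> T HT0; have [B HB TB] := I1 T HT0.
  case BM: (B \in M).
    exists (cover M); first by rewrite !inE eqxx orbT.
    by apply/bigcupP; exists B.
  by exists B => //; rewrite in_setU in_setD BM HB.
move=> B; rewrite !inE => /orP[/andP[_ HB]|/eqP ->]; first exact: I2.
move=> T0 /bigcupP[B0 HB0 T0B0] Hm.
have HB0f : B0 \in fam by move: HB0; rewrite inE => /andP[].
have all0 := I2 B0 HB0f T0 T0B0 Hm.
move: HB0; rewrite inE => /andP[_ /existsP[T1 /andP[T1B0 /existsP[d1 /and3P[Hd1 Hs1 d1T1]]]]].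
have d1S : d1 \subset S := subset_trans d1T1 (all0 T1 T1B0).
move: (Hs1) => /andP[/set0Pn[v /setIP[vd1 vU]] /set0Pn[x /setDP[xd1 xU]]].
have US : U \subset S.
  by apply: (laminar ik HU HS vU (subsetP d1S _ vd1) (subsetP d1S _ xd1)).
move=> T /bigcupP[B2 HB2 TB2].
move: HB2; rewrite inE => /andP[HB2f /existsP[T2 /andP[T2B2 /existsP[d2 /and3P[Hd2 Hs2 d2T2]]]]].
move: Hs2 => /andP[/set0Pn[w /setIP[wd2 wU]] _].
apply: (I2 B2 HB2f T2 T2B2) => //.
by exists w; split; [apply: (subsetP d2T2) | apply: (subsetP US)].
Qed.

Lemma Inv_forests : Inv (forests eu ev D k y OPT).
Proof.
rewrite /forests.
have : all (fun U => U \in Usp) (enum Usp) by apply/allP => U; rewrite mem_enum.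
move: Inv_init; elim: (enum Usp) [set [set T] | T in comps eu ev OPT] => //= U l IH fam Hf /andP[HU Hl].
by apply: IH => //; apply: Inv_merge.
Qed.

End Inv.

Definition Wp i (C : {set V}) := exists a w, [/\ a \in C, [set a; w] \in D, ~~ sat [set a; w],
  alive i a & alive i w].

Lemma BA_cross2 i S : (i < k)%N -> S \in cps i -> ~~ DA i S -> Wp i S ->
  (2 <= #|delta eu ev S :&: OPT|)%N.
Proof.
move=> ik HS nDA [a [w [aS Hd nsat ala alw]]].
have nosep : forall d, d \in D -> ~~ separates S d.
  by move=> d Hd'; apply: contra nDA; apply: sep_DA.
have n1 := cross_not1 c_ge0 feasOPT optOPT minOPT nosep.
rewrite leqNgt; apply/negP => H.
have H0 : #|delta eu ev S :&: OPT| = 0%N.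
  by move: H n1; case: (#|_|) => [|[|]].
have HT : forall T, T \in comps eu ev OPT -> (exists v, v \in T /\ v \in S) -> T \subset S.
  move=> T HT0 [v [vT vS]]; apply/subsetP => u uT.
  have := compsE HT0 vT; move=> TE; rewrite TE in_comp in uT.
  by rewrite -(nocross_pres H0 uT).
have [I1 I2] := Inv_forests (ltnW ik) HS HT.
have [B HB TB] := I1 _ (comp_in_comps eu ev OPT a).
have BS := I2 B HB _ TB (ex_intro _ a (conj (comp_self _ _ _ a) aS)).
have [rB taur] := rP HB.
have rS : r B \in S.
  by move/bigcupP: rB => [T TB' rT]; apply: (subsetP (BS T TB')).
have acov : a \in cover B by apply/bigcupP; exists (Defs.comp eu ev OPT a) => //; apply: comp_self.
have caw : cn i a w.
  apply/negPn/negP => nc; move/negP: nDA; apply; apply/existsP; exists a; rewrite aS /=.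
  by apply/existsP; exists w; rewrite Hd nc.
have wS : w \in S by rewrite (compsE HS aS) in_comp.
have ta := alive_le_tau ala (tauP a).
have tw := alive_le_tau alw (tauP w).
have ti0 : 0 <= t i := t_ge0 run (ltnW ik).
have phi_i : phase k t (t i) = i by apply: (phaseE run) => //; rewrite ?lexx ?(t_lt run).
have actc : forall v, v \in S -> t i <= tau v -> act_conn eu ev k t F tau v (r B).
  move=> v vS tv; exists (t i); split => //; first exact: le_trans ta (taur _ acov).
  by exists S; rewrite /C_at ?phi_i // vS rS.
have wT : w \in Defs.comp eu ev OPT a.
  by rewrite in_comp; apply: (feasP feasOPT Hd); rewrite !inE eqxx ?orbT.
move/negP: nsat; apply; apply/existsP.
exists [set v in Defs.comp eu ev OPT a | `[< act_conn eu ev k t F tau v (r B) >]].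
apply/andP; split.
  rewrite inE; apply/existsP; exists B; rewrite HB /=; apply/existsP; exists (Defs.comp eu ev OPT a).
  rewrite TB eqxx /=; apply/set0Pn; exists a; rewrite inE comp_self /=.
  by apply/asboolP; apply: actc.
apply/subsetP => x; rewrite !inE => /orP[/eqP->|/eqP->].
  by rewrite conn_refl /=; apply/asboolP; apply: actc.
by rewrite in_comp in wT; rewrite wT /=; apply/asboolP; apply: actc.
Qed.


Lemma comps_partition (F1 F2 : {set E}) (f : {set V} -> R) : F1 \subset F2 ->
  \sum_(C in comps eu ev F2) \sum_(C' in comps eu ev F1 | C' \subset C) f C' =
  \sum_(C' in comps eu ev F1) f C'.
Proof.
move=> s12.
rewrite (exchange_big_dep (fun C' => C' \in comps eu ev F1)) /=; last by move=> ? ? _ /andP[].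
apply: eq_bigr => C' /imsetP[v _ ->].
rewrite (big_pred1 (Defs.comp eu ev F2 v)) // => C /=.
apply/idP/idP.
  case/andP=> HC /andP[_ sub]; apply/eqP; apply: (compsE HC).
  by apply: (subsetP sub); apply: comp_self.
move/eqP ->; rewrite comp_in_comps comp_in_comps /=; exact: comp_mono.
Qed.

Definition wt i C : R := if `[< Wp i C >] then 1 else 0.
Definition xb i C : R := b i C + brate eu ev D eps (F i) (b i) C * (t i.+1 - t i).

Lemma wt_ge0 i C : 0 <= wt i C.
Proof. by rewrite /wt; case: ifP. Qed.

Lemma Wp_up i (C' C : {set V}) : (i < k)%N -> C' \in cps i -> act i C' -> C' \subset C ->
  Wp i C' -> Wp i.+1 C.
Proof.
move=> ik HC' Ha sub [a [w [aC Hd ns ala alw]]].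
exists a, w; split => //; first exact: (subsetP sub).
  apply: (alive_step run) => //; by rewrite -(compsE HC' aC).
have [caw|ncaw] := boolP (cn i a w).
  apply: (alive_step run) => //.
  have wC : w \in C' by rewrite (compsE HC' aC) in_comp.
  by rewrite -(compsE HC' wC).
apply: (alive_step run) => //; apply: active_DA; first exact: comp_in_comps.
by apply: (DA_comp (w := a)); rewrite 1?setUC // conn_sym.
Qed.

Lemma Wa i S : (i < k)%N -> act i S -> S \in Usp -> ~~ sat (phi S) -> Wp i S.
Proof.
move=> ik Ha HU ns; have [Hd Hsep] := phiP HU.
move: (Hsep) => /andP[/set0Pn[p /setIP[pd pS]] /set0Pn[q /setDP[qd qS]]].
have pq : p != q by apply: contraNneq qS => <-.
have dE := pair_eq (D2 Hd) pd qd pq.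
have HS := active_comps Ha.
have ncpq : ~~ cn i p q by apply: contra qS => Hc; rewrite (compsE HS pS) in_comp.
exists p, q; rewrite -dE; split => //.
  by apply: (alive_demand run (w := q)) => //; [exact: ltnW | rewrite -dE].
apply: (alive_demand run (w := p)) => //; first exact: ltnW.
  by rewrite setUC -dE.
by rewrite conn_sym.
Qed.

Lemma b_step i C : (i < k)%N -> C \in cps i.+1 ->
  b i.+1 C = \sum_(C' in cps i | C' \subset C) xb i C'.
Proof. by move/(stepP run) => [_ _ _ _ [H _ _]] /H. Qed.

Lemma xb_ge0 i C : (i < k)%N -> C \in cps i -> 0 <= b i C -> 0 <= xb i C.
Proof.
move=> ik HC b0; rewrite /xb /brate.
have dp := dpos run ik.
case: ifP => HDA; first by apply: addr_ge0 => //; apply: mulr_ge0 => //; apply: ltW.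
case: ifP => HBA; last by rewrite mul0r addr0.
have := (stepP run ik) => -[_ _ _ _ [_ H _]].
have := H C HC HBA; rewrite mulN1r subr_ge0.
done.
Qed.

Lemma b_ge0 j C : (j <= k)%N -> C \in cps j -> 0 <= b j C.
Proof.
elim: j C => [|j IH] C jk HC; first by rewrite (b0 run).
rewrite b_step //; apply: sumr_ge0 => C' /andP[HC' _].
by apply: xb_ge0 => //; apply: IH => //; apply: ltnW.
Qed.

Lemma xb_pos_act i C : C \in cps i -> 0 < xb i C -> act i C.
Proof.
move=> HC; apply: contraTT => na.
move: na; rewrite /active HC /= negb_or => /andP[nD nB].
rewrite /xb /brate (negbTE nD) (negbTE nB) mul0r addr0 -leNgt.
by move: nB; rewrite /budget_active nD /= -leNgt.
Qed.

Lemma brate_inact i C : C \in cps i -> ~~ act i C -> brate eu ev D eps (F i) (b i) C = 0.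
Proof.
move=> HC; rewrite /active HC /= negb_or => /andP[nD nB].
by rewrite /brate (negbTE nD) (negbTE nB).
Qed.

Definition Phi j := \sum_(C in cps j) wt j C * b j C.

Lemma Phi_step i : (i < k)%N ->
  Phi i + (t i.+1 - t i) * \sum_(S | act i S) wt i S * brate eu ev D eps (F i) (b i) S
  <= Phi i.+1.
Proof.
move=> ik.
have -> : \sum_(S | act i S) wt i S * brate eu ev D eps (F i) (b i) S =
          \sum_(C in cps i) wt i C * brate eu ev D eps (F i) (b i) C.
  rewrite [RHS](bigID (fun S => act i S)) /=.
  rewrite [X in _ = _ + X]big1 ?addr0; last first.
    by move=> C /andP[HC na]; rewrite brate_inact // mulr0.
  apply: eq_bigl => S; apply/idP/idP => [Ha|/andP[]//].
  by rewrite (active_comps Ha) Ha.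
rewrite /Phi.
have -> : \sum_(C in cps i.+1) wt i.+1 C * b i.+1 C =
  \sum_(C in cps i.+1) \sum_(C' in cps i | C' \subset C) wt i.+1 C * xb i C'.
  by apply: eq_bigr => C HC; rewrite b_step // mulr_sumr.
apply: le_trans (_ : \sum_(C in cps i.+1) \sum_(C' in cps i | C' \subset C) wt i C' * xb i C' <= _).
  rewrite comps_partition; last by apply: (F_step run ik).
  rewrite mulr_sumr -big_split /=; apply: ler_sum => C HC.
  set d := t i.+1 - t i; set br := brate _ _ _ _ _ _ C.
  have -> : wt i C * xb i C = wt i C * b i C + d * (wt i C * br) by rewrite /xb -/br -/d; ring.
  exact: lexx.
apply: ler_sum => C HC; apply: ler_sum => C' /andP[HC' sub].
have xg := xb_ge0 ik HC' (b_ge0 (ltnW ik) HC').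
rewrite /wt; case: asboolP => HW; last by case: ifP => _; rewrite ?mul0r ?mul1r.
case: asboolP => HW'; first by [].
rewrite mul1r mul0r; move: xg; rewrite le0r => /orP[/eqP->//|xp].
by case: HW'; apply: (Wp_up ik HC' (xb_pos_act HC' xp) sub HW).
Qed.


Definition G (S : {set V}) : R := (#|delta eu ev S :&: OPT|)%:R - (S \in Usp)%:R
   - 2 * eps * ((S \in Usp) && ~~ sat (phi S))%:R.

Definition Y j := \sum_(S : {set V}) y j S * G S.

Lemma g_nonneg i S : (i < k)%N -> act i S ->
  0 <= G S + 2 * (wt i S * brate eu ev D eps (F i) (b i) S).
Proof.
move=> ik Ha; have HS := active_comps Ha.
have aux1 : forall n x : R, 1 <= n -> 0 <= x -> 0 <= n - 1 - 2 * eps * 0 + 2 * (x * eps).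
  move=> n x h1 h2; have : 0 <= x * eps by apply: mulr_ge0.
  move=> h3; rewrite mulr0 subr0; have h4 : 0 <= n - 1 by rewrite subr_ge0.
  by apply: addr_ge0 => //; apply: mulr_ge0.
rewrite /G; set n := #|_|.
case HU: (S \in Usp) => /=.
  have [d Hd Hs] := Usep_sep HU.
  have n1 : 1 <= n%:R :> R by rewrite ler1n; apply: (cross_ge1 feasOPT Hd Hs).
  have HDA := sep_DA HS Hd Hs.
  rewrite /brate HDA.
  case Hsat: (sat (phi S)) => /=.
    by apply: aux1 => //; apply: wt_ge0.
  have HW := Wa ik Ha HU (negbT Hsat).
  rewrite /wt; case: asboolP => // _.
  have aux2 : forall n : R, 1 <= n -> 0 <= n - 1 - 2 * eps * 1%:R + 2 * (1 * eps).
    by move=> m hm; rewrite mulr1 mul1r subrK subr_ge0.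
  exact: aux2.
rewrite subr0 mulr0 subr0.
have n0 : 0 <= n%:R :> R by apply: ler0n.
rewrite /brate; case: ifP => HDA.
  by apply: addr_ge0 => //; apply: mulr_ge0 => //; apply: mulr_ge0 => //; apply: wt_ge0.
case: ifP => HBA; last by rewrite mulr0 mulr0 addr0.
rewrite /wt; case: asboolP => HW; last by rewrite mul0r mulr0 addr0.
have n2 : 2 <= n%:R :> R.
  rewrite -[2]/(2%:R) ler_nat; apply: (BA_cross2 ik HS _ HW); by rewrite HDA.
by rewrite mul1r mulrN1 subr_ge0.
Qed.

Lemma Y_step i : (i < k)%N ->
  Y i.+1 = Y i + (t i.+1 - t i) * \sum_(S | act i S) G S.
Proof.
move=> ik; rewrite /Y mulr_sumr [X in _ + X]big_mkcond -big_split /=.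
apply: eq_bigr => S _; rewrite (y_step run) // mulrDl; congr (_ + _).
by case: ifP; rewrite ?mul0r.
Qed.

Lemma inv_all j : (j <= k)%N -> 0 <= Y j + 2 * Phi j.
Proof.
elim: j => [|j IH] jk.
  rewrite /Y /Phi big1 ?add0r; last by move=> S _; rewrite (y0 run) mul0r.
  by rewrite big1 ?mulr0 // => C _; rewrite (b0 run) mulr0.
have IH' := IH (ltnW jk).
have St := Phi_step jk.
rewrite Y_step //.
set d := t j.+1 - t j.
have dp : 0 < d := dpos run jk.
have Hs : 0 <= \sum_(S | act j S) (G S + 2 * (wt j S * brate eu ev D eps (F j) (b j) S)).
  by apply: sumr_ge0 => S Ha; apply: g_nonneg.
rewrite big_split /= -mulr_sumr in Hs.
set A := \sum_(S | act j S) G S in Hs *.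
set B := \sum_(S | act j S) _ in St Hs.
have dA : 0 <= d * (A + 2 * B) by apply: mulr_ge0 => //; apply: ltW.
move: IH' St dA; set P0 := Phi j; set P1 := Phi j.+1; set Y0 := Y j.
move=> h1 h2 h3.
have aux : forall Y0 P0 P1 d A B : R, 0 <= Y0 + 2 * P0 -> P0 + d * B <= P1 ->
   0 <= d * (A + 2 * B) -> 0 <= Y0 + d * A + 2 * P1.
  by move=> ? ? ? ? ? ? ? ? ?; nra.
exact: aux h1 h2 h3.
Qed.

Lemma Phi_k_le0 : Phi k <= 0.
Proof.
rewrite /Phi; apply: sumr_le0 => C HC.
apply: mulr_ge0_le0; first exact: wt_ge0.
have := finalP run C; rewrite /active HC /= negb_or => /andP[nD].
by rewrite /budget_active nD /= -leNgt.
Qed.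

Lemma Yk_ge0 : 0 <= Y k.
Proof.
have h := inv_all (leqnn k); have h2 := Phi_k_le0.
have aux : forall a p : R, 0 <= a + 2 * p -> p <= 0 -> 0 <= a by move=> a p; lra.
exact: aux h h2.
Qed.


Lemma load_le e : load eu ev (y k) e <= c e.
Proof.
have : (k = 0 \/ exists k', k = k'.+1)%N by case: (k) => [|n]; [left|right; exists n].
case=> [k0|[k' k1]].
  by rewrite /load k0 big1 // => S _; rewrite (y0 run).
have k'k : (k' < k)%N by rewrite k1.
by have [_ _ H _ _] := stepP run k'k; rewrite k1; apply: H.
Qed.

Lemma cost_ge_L : \sum_(S : {set V}) y k S * (#|delta eu ev S :&: OPT|)%:R <= cost c OPT.
Proof.
apply: le_trans (_ : \sum_(e in OPT) load eu ev (y k) e <= _); last first.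
  by apply: ler_sum => e _; apply: load_le.
rewrite /load (exchange_big_dep predT) //= le_eqVlt; apply/orP; left; apply/eqP; apply: eq_bigr => S _.
have -> : \sum_(e in OPT | e \in delta eu ev S) y k S = \sum_(e in delta eu ev S :&: OPT) y k S.
  by apply: eq_bigl => e; rewrite !inE andbC.
by rewrite sumr_const mulr_natr.
Qed.

Lemma Yk_eq : Y k = \sum_(S : {set V}) y k S * (#|delta eu ev S :&: OPT|)%:R
   - ysum k y Usp - 2 * eps * \sum_(S in Usp | ~~ sat (phi S)) y k S.
Proof.
rewrite /Y /G.
have -> : \sum_S y k S * ((#|delta eu ev S :&: OPT|)%:R - (S \in Usp)%:R
   - 2 * eps * ((S \in Usp) && ~~ sat (phi S))%:R) =
   \sum_S (y k S * (#|delta eu ev S :&: OPT|)%:R - y k S * (S \in Usp)%:R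
   - 2 * eps * (y k S * ((S \in Usp) && ~~ sat (phi S))%:R)).
  by apply: eq_bigr => S _; ring.
rewrite !sumrB -mulr_sumr; congr (_ - _ - 2 * eps * _).
  rewrite /ysum [RHS]big_mkcond /=; apply: eq_bigr => S _.
  by case: (S \in Usp); rewrite ?mulr1 ?mulr0.
rewrite [RHS]big_mkcond /=; apply: eq_bigr => S _.
by case: (_ && _); rewrite ?mulr1 ?mulr0.
Qed.

Lemma val_eq : ysum k y Usp - valS D k y phi CC = \sum_(S in Usp | ~~ sat (phi S)) y k S.
Proof.
rewrite /valS /Defs.val.
rewrite (exchange_big_dep (fun U => U \in Usp)) /=; last by move=> d U _ /andP[].
rewrite /ysum -sumrB big_mkcondr /=; apply: eq_bigr => U HU.
have [HdD _] := phiP HU.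
case Hs: (sat (phi U)) => /=.
  rewrite (big_pred1 (phi U)) ?subrr // => d /=.
  case: (eqVneq d (phi U)) => [->|ne]; first by rewrite HdD Hs HU ?eqxx.
  by rewrite !andbF.
rewrite big_pred0 ?subr0 // => d.
case: (eqVneq d (phi U)) => [->|ne]; first by rewrite Hs andbF.
by rewrite !andbF.
Qed.

End Main.

Theorem lemma6p5 (R : realType) (V E : finType) (eu ev : E -> V) (c : E -> R)
  (D : {set {set V}}) (eps : R)
  (k : nat) (t : nat -> R) (F : nat -> {set E}) (y b : nat -> {set V} -> R)
  (OPT : {set E}) (tau : V -> R) (phi : {set V} -> {set V})
  (r : {set {set V}} -> V) :
  (forall e, 0 <= c e) ->
  (forall d, d \in D -> #|d| = 2%N) ->
  0 <= eps ->
  moat_run eu ev c D eps k t F y b ->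
  feasible eu ev D OPT ->
  (forall F' : {set E}, feasible eu ev D F' -> cost c OPT <= cost c F') ->
  (forall e, e \in OPT -> c e = 0 -> ~~ feasible eu ev D (OPT :\ e)) ->
  (forall v, is_deact_time eu ev D k t F b v (tau v)) ->
  (forall U, U \in Usep D k y -> phi U \in D /\ separates U (phi U)) ->
  (forall B, B \in forests eu ev D k y OPT ->
     r B \in cover B /\ (forall v, v \in cover B -> tau v <= tau (r B))) ->
  excess c D k y OPT >=
    2 * eps * (ysum k y (Usep D k y)
               - valS D k y phi (canonical_collection eu ev D k t F y OPT tau r)).
Proof.
move=> c0 D2 e0 run feas opt mn tauP phiP rP.
rewrite (val_eq eu ev t F OPT tau r phiP) /excess.
have h1 := cost_ge_L OPT c0 run.
have h2 := Yk_ge0 c0 D2 e0 run feas opt mn tauP phiP rP.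
rewrite Yk_eq in h2.
move: h1 h2.
set L := \sum_S _; set Z := \sum_(S in _ | _) _; set Ys := ysum _ _ _; set C0 := cost _ _.
move=> h1 h2.
have aux : forall L Z Ys C0 eps : R, L <= C0 -> 0 <= L - Ys - 2 * eps * Z ->
   2 * eps * Z <= C0 - Ys by move=> *; lra.
exact: aux h1 h2.
Qed.
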